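(* There are absolute constants such that for every $m,\lambda\ge 1$ there exist a directed graph $G$ with $O(m)$ edges and non-negative edge weights, and a number $d$, such that every collection of subgraphs $G'_1,\dots,G'_z\subseteq G$ that are all $d\lambda$-clustered and that together cover all $d$-paths in $G$ must have total size $\sum_{i=1}^{z}|E(G'_i)|=\Omega\!\left(m\sqrt{m/\lambda}\right)$.
   Context: The length of a path is the sum of its edge weights. A $d$-path is a directed path of length at most $d$. A subgraph $H\subseteq G$ covers a path $p$ if every edge of $p$ belongs to $E(H)$; a collection of subgraphs covers all $d$-paths if every $d$-path of $G$ is covered by at least one subgraph in the collection. A directed graph $H$ is $D$-clustered if every strongly connected component $C$ of $H$ has diameter at most $D$, where the diameter of $C$ is $\max_{x,y\in C}\mathrm{dist}_{H[C]}(x,y)$. *)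

(* Defs.v *)
From HB Require Import structures.
From mathcomp Require Import all_boot all_order all_algebra.
From mathcomp Require Export reals.
Set Implicit Arguments. Unset Strict Implicit. Unset Printing Implicit Defensive.
Import Order.TTheory GRing.Theory Num.Theory.
Local Open Scope ring_scope.

Record wdigraph (R : numDomainType) := WDigraph {
  vert : finType;
  edge : finType;
  src : edge -> vert;
  dst : edge -> vert;
  wt : edge -> R }.

Section Paths.
Variables (R : numDomainType) (G : wdigraph R).

Fixpoint walk_from (x : vert G) (p : seq (edge G)) : bool :=
  if p is e :: p' then (src e == x) && walk_from (dst e) p' else true.

Definition pverts (x : vert G) (p : seq (edge G)) : seq (vert G) :=
  x :: map (@dst R G) p.

Definition is_dpath (x : vert G) (p : seq (edge G)) : bool :=
  walk_from x p && uniq (pverts x p).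

Definition pend (x : vert G) (p : seq (edge G)) : vert G :=
  last x (map (@dst R G) p).

Definition plen (p : seq (edge G)) : R := \sum_(e <- p) wt e.

Definition reach (H : {set edge G}) (x y : vert G) : Prop :=
  exists p, [/\ is_dpath x p, pend x p = y & all (fun e => e \in H) p].

Definition same_scc (H : {set edge G}) (x y : vert G) : Prop :=
  reach H x y /\ reach H y x.

(* H is D-clustered: for every SCC C of H and x, y in C,
   dist_{H[C]}(x, y) <= D, i.e. some path from x to y inside H[C]
   (edges of H with both endpoints in C) has length <= D. *)
Definition clustered (H : {set edge G}) (D : R) : Prop :=
  forall x y, same_scc H x y ->
  exists p, [/\ is_dpath x p, pend x p = y,
     all (fun e => e \in H) p,
     (forall e, e \in p -> same_scc H x (src e) /\ same_scc H x (dst e))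
     & plen p <= D].

Definition covers_dpaths (z : nat) (Hs : 'I_z -> {set edge G}) (d : R) : Prop :=
  forall x p, is_dpath x p -> plen p <= d ->
  exists i : 'I_z, all (fun e => e \in Hs i) p.

End Paths.

(* Main.v *)
Require Import Defs.
From mathcomp Require Import all_boot all_order all_algebra.
From mathcomp Require Import reals zify ring lra.
Import Order.TTheory GRing.Theory Num.Theory.
Set Implicit Arguments. Unset Strict Implicit. Unset Printing Implicit Defensive.

Section Constr.
Variables (R : numDomainType) (Rr N : nat).

Definition Vt := (('I_Rr.+1 * 'I_N.+2) + 'I_Rr.+1)%type.
Definition Et := (('I_Rr.+1 * 'I_N.+2) * 'I_3)%type.
Definition nxt (j : 'I_N.+2) : 'I_N.+2 := inord (j.+1 %% N.+2).
Definition esrc (e : Et) : Vt :=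
  if val e.2 == 2 then inr e.1.1 else inl e.1.
Definition edst (e : Et) : Vt :=
  if val e.2 == 0 then inl (e.1.1, nxt e.1.2)
  else if val e.2 == 1 then inr e.1.1
  else if (e.1.1 < Rr)%N then inl (inord (e.1.1).+1, e.1.2) else inr e.1.1.
Definition ewt (e : Et) : R := if val e.2 == 0 then 1%R else 0%R.
Definition Gc : wdigraph R := WDigraph esrc edst ewt.

Definition vrank (v : Vt) : nat :=
  match v with inl p => (2 * p.1)%N | inr l => (2 * l).+1 end.

Lemma nxtE (j : 'I_N.+2) : (nxt j : nat) = (j.+1 %% N.+2)%N.
Proof. by rewrite /nxt inordK // ltn_pmod. Qed.

Lemma nxt_neq j : nxt j != j.
Proof.
apply/eqP => /(congr1 (@nat_of_ord _)); rewrite nxtE.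
have := ltn_ord j.
case: (ltngtP j.+1 N.+2) => H.
- rewrite modn_small //; lia.
- lia.
- by rewrite H modnn => _ H0; move: H; rewrite -H0.
Qed.

Lemma rank_edge (e : Et) : (vrank (esrc e) <= vrank (edst e))%N.
Proof.
case: e => [[l j] [[|[|[|k]]] Hk]]; rewrite /esrc /edst /=.
- by [].
- by [].
- case: ifP => H /=; last by [].
  rewrite inordK; lia.
- lia.
Qed.

Lemma walk_rank (p : seq Et) (v : Vt) :
  @walk_from R Gc v p -> (vrank v <= vrank (@pend R Gc v p))%N.
Proof.
elim: p v => [|e p IH] v //=.
case/andP => /eqP <- /IH; rewrite /pend /=.
exact: leq_trans (rank_edge e).
Qed.

Lemma walk_cyc (p : seq Et) (v : Vt) :
  @walk_from R Gc v p -> ~~ odd (vrank v) ->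
  (vrank (@pend R Gc v p) <= vrank v)%N -> all (fun e : Et => val e.2 == 0) p.
Proof.
elim: p v => [|e p IH] v //=.
case/andP => /eqP Hs Hw Hodd.
rewrite /pend /= -/(@pend R Gc (edst e) p) => Hle.
have Hr := walk_rank Hw.
move: Hs Hw Hodd Hle Hr; case: e => [[l j] [[|[|[|k]]] Hk]]; rewrite /esrc /edst /= => <-.
- move=> Hw Hodd Hle Hr; apply: IH Hw _ _ => //=; by rewrite oddM.
- move=> _ _ Hle Hr; have := leq_trans Hr Hle; by rewrite ltnn.
- by rewrite /= oddM.
- by [].
Qed.

Lemma walk_pos (p : seq Et) (l : 'I_Rr.+1) (a : 'I_N.+2) :
  all (fun e : Et => val e.2 == 0) p -> @walk_from R Gc (inl (l, a)) p ->
  exists b : 'I_N.+2, @pend R Gc (inl (l, a)) p = inl (l, b) /\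
     (b : nat) = ((a + size p) %% N.+2)%N /\ @plen R Gc p = ((size p)%:R)%R.
Proof.
elim: p a => [|e p IH] a /=.
  by move=> _ _; exists a; rewrite addn0 modn_small // /plen big_nil.
case/andP => He Hall /andP [/eqP Hs Hw].
move: Hs Hw He; case: e => [[l' j] k] /= + + Hk0.
have -> : k = ord0 by apply/val_inj/eqP.
rewrite /esrc /edst /= => -[-> ->] Hw.
have [b [Hb1 [Hb2 Hb3]]] := IH _ Hall Hw.
exists b; split; first by rewrite /pend /= -Hb1.
split; first by rewrite Hb2 nxtE modnDml addSnnS.
by rewrite /plen big_cons -/(@plen R Gc p) Hb3 /ewt /= -natr1 addrC.
Qed.

Lemma dist_lb (p : seq Et) (l : 'I_Rr.+1) :
  @walk_from R Gc (inl (l, inord 1)) p ->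
  @pend R Gc (inl (l, inord 1)) p = inl (l, ord0) ->
  ((N.+1)%:R <= @plen R Gc p)%R.
Proof.
move=> Hw Hp.
have Hall : all (fun e : Et => val e.2 == 0) p.
  by apply: (walk_cyc Hw); [rewrite /= oddM | rewrite Hp].
have [b [Hb1 [Hb2 Hb3]]] := walk_pos Hall Hw.
rewrite Hb3 ler_nat; move: Hb1; rewrite Hp => -[] /(congr1 (@nat_of_ord _)) /=.
rewrite Hb2 inordK // add1n => /eqP; rewrite eq_sym -/(dvdn _ _) => Hd.
by have := dvdn_leq (ltn0Sn _) Hd; rewrite ltnS.
Qed.


Definition arc (l : 'I_Rr.+1) a k : seq Et :=
  [seq ((l, inord i), ord0) : Et | i <- iota a k].

Lemma nxt_inord a : (a.+1 < N.+2)%N -> nxt (inord a) = inord a.+1.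
Proof.
move=> Ha; apply: val_inj => /=; rewrite nxtE !inordK ?modn_small //; lia.
Qed.

Lemma walk_arc (l : 'I_Rr.+1) a k : (a + k <= N.+2)%N ->
  @walk_from R Gc (inl (l, inord a)) (arc l a k).
Proof.
elim: k a => [|k IH] a Hak //=.
apply/andP; split; first by rewrite /esrc /=.
case: k IH Hak => [|k] IH Hak //.
rewrite /edst /= nxt_inord; last lia.
apply: IH; lia.
Qed.

Lemma arc_pverts (l : 'I_Rr.+1) :
  @pverts R Gc (inl (l, inord 1)) (arc l 1 N.+1) =
  [seq (inl (l, nxt (inord i)) : Vt) | i <- iota 0 N.+2].
Proof.
rewrite /pverts /arc -map_comp /=.
by rewrite nxt_inord.
Qed.

Lemma arc_uniq (l : 'I_Rr.+1) :
  uniq [seq (inl (l, nxt (inord i)) : Vt) | i <- iota 0 N.+2].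
Proof.
rewrite map_inj_in_uniq ?iota_uniq // => i i'.
rewrite !mem_iota !add0n => Hi Hi' [] /(congr1 (@nat_of_ord _)).
rewrite !nxtE !inordK; first last.
- by case/andP: Hi'.
- by case/andP: Hi.
rewrite -(addn1 i) -(addn1 i') => /eqP.
rewrite eqn_modDr !modn_small => [/eqP //||]; [by case/andP: Hi | by case/andP: Hi'].
Qed.

Lemma arc_pend (l : 'I_Rr.+1) :
  @pend R Gc (inl (l, inord 1)) (arc l 1 N.+1) = inl (l, ord0).
Proof.
rewrite /pend /arc -map_comp.
rewrite (_ : inl (l, inord 1) = (fun i => (inl (l, nxt (inord i)) : Vt)) 0%N); last first.
  by rewrite /= nxt_inord.
rewrite last_map (_ : iota 1 N.+1 = iota 1 N ++ [:: N.+1]); last first.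
  by rewrite -[N.+1]addn1 iotaD add1n addn1.
rewrite last_cat /=.
congr inl; congr pair; apply: val_inj => /=.
by rewrite nxtE inordK // modnn.
Qed.

Lemma full_not_clustered (H : {set Et}) (D : R) (l : 'I_Rr.+1) :
  (forall j : 'I_N.+2, ((l, j), ord0) \in H) -> (D < (N.+1)%:R)%R ->
  ~ @clustered R Gc H D.
Proof.
move=> Hfull HD Hcl.
have Hsc : @same_scc R Gc H (inl (l, inord 1)) (inl (l, ord0)).
  split.
  - exists (arc l 1 N.+1); split.
    + apply/andP; split; first by apply: walk_arc.
      by rewrite arc_pverts arc_uniq.
    + exact: arc_pend.
    + by apply/allP => e /mapP [i _ ->].
  - exists [:: ((l, ord0), ord0)]; split => //=.
    + rewrite /is_dpath /= /esrc /= eqxx /=.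
      rewrite /pverts /= /edst /= inE andbT.
      apply/eqP => -[] /eqP; by rewrite eq_sym (negbTE (nxt_neq _)).
    + by rewrite Hfull.
have [p [Hp1 Hp2 _ _ Hp5]] := Hcl _ _ Hsc.
have H1 := dist_lb (proj1 (andP Hp1)) Hp2.
by have := lt_le_trans HD (le_trans H1 Hp5); rewrite ltxx.
Qed.

Section Path.
Variable J : nat -> 'I_N.+2.

Definition cycE l j : Et := ((inord l, j), ord0).
Definition hubE l j : Et := ((inord l, j), @Ordinal 3 1 isT).
Definition frE l j : Et := ((inord l, j), @Ordinal 3 2 isT).
Definition sv l j : Vt := inl (inord l, j).

Fixpoint pth (k l : nat) : seq Et :=
  match k with
  | 0 => [:: cycE l (J l)]
  | k'.+1 => [:: cycE l (J l), hubE l (nxt (J l)), frE l (J l.+1) & pth k' l.+1]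
  end.

Lemma fr_dst l j : (l < Rr)%N -> edst (frE l j) = sv l.+1 j.
Proof. by move=> H; rewrite /edst /= inordK ?H // ltnW. Qed.

Lemma pth_pverts k l : (l < Rr)%N ->
  @pverts R Gc (sv l (J l)) (pth k.+1 l) =
  [:: sv l (J l), sv l (nxt (J l)), inr (inord l) & @pverts R Gc (sv l.+1 (J l.+1)) (pth k l.+1)].
Proof. by move=> H; rewrite /pverts /= fr_dst. Qed.

Lemma pth_walk k l : (l + k <= Rr)%N -> @walk_from R Gc (sv l (J l)) (pth k l).
Proof.
elim: k l => [|k IH] l Hlk /=; first by rewrite /esrc /= eqxx.
rewrite /esrc /= !eqxx /= fr_dst; last lia.
apply: IH; lia.
Qed.

Lemma vrank_sv l j : (l <= Rr)%N -> vrank (sv l j) = (2 * l)%N.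
Proof. by move=> H; rewrite /= inordK. Qed.

Lemma pth_rank k l : (l + k <= Rr)%N -> forall v,
  v \in @pverts R Gc (sv l (J l)) (pth k l) -> (2 * l <= vrank v)%N.
Proof.
elim: k l => [|k IH] l Hlk v.
  rewrite /pverts /= !inE => /orP [] /eqP -> /=; rewrite inordK //; lia.
rewrite pth_pverts; last lia.
rewrite !inE => /orP [/eqP ->|/orP [/eqP ->|/orP [/eqP ->|Hv]]] /=.
- rewrite inordK //; lia.
- rewrite inordK //; lia.
- rewrite inordK //; lia.
- have := IH l.+1 ltac:(lia) v Hv; lia.
Qed.

Lemma pth_uniq k l : (l + k <= Rr)%N -> uniq (@pverts R Gc (sv l (J l)) (pth k l)).
Proof.
elim: k l => [|k IH] l Hlk.
  rewrite /pverts /= !inE andbT.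
  apply/eqP => -[] /eqP; by rewrite eq_sym (negbTE (nxt_neq _)).
rewrite pth_pverts; last lia.
set rest := @pverts R Gc _ _.
have Hr : forall v, (vrank v < 2 * l.+1)%N -> v \notin rest.
  by move=> v Hv; apply/negP => /(pth_rank (k:=k) (l:=l.+1) ltac:(lia)); lia.
have Hl : (l <= Rr)%N by lia.
have Hu : uniq rest by apply: IH; lia.
clearbody rest.
rewrite cons_uniq (cons_uniq (sv l (nxt _))) (cons_uniq (inr _)) !inE !negb_or Hu.
have Hab : sv l (J l) != sv l (nxt (J l)).
  by apply/eqP => -[] /eqP; rewrite eq_sym (negbTE (nxt_neq _)).
rewrite Hab !Hr ?vrank_sv //= ?inordK //; lia.
Qed.

Lemma pth_len k l : @plen R Gc (pth k l) = (k.+1%:R)%R.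
Proof.
elim: k l => [|k IH] l; first by rewrite /plen big_cons big_nil /= /ewt /= addr0.
rewrite /plen !big_cons -/(@plen R Gc (pth k l.+1)) IH /= /ewt /=.
by rewrite !add0r addrC natr1.
Qed.

Lemma pth_mem k l l0 : (l <= l0 <= l + k)%N -> cycE l0 (J l0) \in pth k l.
Proof.
elim: k l => [|k IH] l H.
  have -> : l0 = l by lia.
  by rewrite inE.
rewrite /= !inE; case: (ltngtP l l0) => H1.
- by rewrite IH ?orbT //; lia.
- lia.
- by rewrite H1 eqxx.
Qed.

End Path.

Lemma mult z (Hs : 'I_z -> {set Et})
  (cov : @covers_dpaths R Gc z Hs (Rr.+1%:R)%R)
  (miss : forall i (l : nat), (l <= Rr)%N -> (0 < Rr)%N -> exists j, cycE l j \notin Hs i)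
  (l0 : 'I_Rr.+1) (j0 : 'I_N.+2) :
  (Rr.+1 <= #|[set i | ((l0, j0), ord0) \in Hs i]|)%N.
Proof.
rewrite leqNgt; apply/negP => Hlt.
set S := [set i | ((l0, j0), ord0) \in Hs i] in Hlt.
set s := enum S.
have Hss : (size s <= Rr)%N by rewrite /s -cardE; lia.
pose mj (i : 'I_z) (l : nat) : 'I_N.+2 := odflt j0 [pick j | cycE l j \notin Hs i].
pose slot (l : nat) := if (l < l0)%N then l else l.-1.
pose J (l : nat) : 'I_N.+2 :=
  if l == l0 then j0 else
  if nth None (map Some s) (slot l) is Some i then mj i l else j0.
have [i Hi] : exists i, all (fun e => e \in Hs i) (pth J Rr 0).
  apply: (cov (sv 0 (J 0%N))).
  - by apply/andP; split; [apply: pth_walk | apply: pth_uniq].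
  - by rewrite pth_len.
have He : ((l0, j0), ord0) \in Hs i.
  have := pth_mem J (k:=Rr) (l:=0) (l0:=l0) ltac:(have := ltn_ord l0; lia).
  move=> /(allP Hi).
  by rewrite /cycE /J eqxx inord_val.
have iS : i \in s by rewrite mem_enum inE.
set q := index i s.
have Hq : (q < size s)%N by rewrite index_mem.
pose l := if (q < l0)%N then q else q.+1.
have Hl : (l <= Rr)%N by rewrite /l; case: (ltnP q l0) => _; lia.
have Hlne : (l == l0) = false by rewrite /l; case: (ltnP q l0) => H; apply/eqP; lia.
have Hslot : slot l = q.
  rewrite /slot /l; case: (ltnP q l0) => H /=.
  - by rewrite H.
  - by rewrite ltnNge (ltnW (leq_ltn_trans H (ltnSn q))) /=.
have HJ : J l = mj i l.
  by rewrite /J Hlne Hslot (nth_map i) // nth_index.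
have Hin := allP Hi _ (pth_mem J (k:=Rr) (l:=0) (l0:=l) ltac:(lia)).
rewrite HJ in Hin.
have [j Hj] := miss i l Hl ltac:(lia).
move: Hin; rewrite /mj; case: pickP => [j' Hj'|Hn] /=.
- by rewrite (negbTE Hj').
- by have := Hn j; rewrite Hj.
Qed.

Lemma total_lb z (Hs : 'I_z -> {set Et})
  (cov : @covers_dpaths R Gc z Hs (Rr.+1%:R)%R)
  (miss : forall i (l : nat), (l <= Rr)%N -> (0 < Rr)%N -> exists j, cycE l j \notin Hs i) :
  (Rr.+1 * N.+2 * Rr.+1 <= \sum_(i < z) #|Hs i|)%N.
Proof.
have E1 : \sum_(i < z) #|Hs i| = \sum_(e : Et) #|[set i | e \in Hs i]|.
  transitivity (\sum_(i < z) \sum_(e : Et) (if e \in Hs i then 1 else 0))%N.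
    by apply: (@eq_bigr nat 0%N addn) => i _; rewrite -sum1_card big_mkcond.
  rewrite exchange_big; apply: (@eq_bigr nat 0%N addn) => e _.
  rewrite -sum1_card [in RHS]big_mkcond; apply: eq_bigr => i _; by rewrite inE.
rewrite E1.
have -> : (Rr.+1 * N.+2 * Rr.+1 = \sum_(a : 'I_Rr.+1 * 'I_N.+2) Rr.+1)%N.
  by rewrite sum_nat_const card_prod !card_ord.
have -> : (\sum_(e : Et) #|[set i | e \in Hs i]| =
  \sum_(a : 'I_Rr.+1 * 'I_N.+2) \sum_(k : 'I_3) #|[set i | (a, k) \in Hs i]|)%N.
  rewrite pair_bigA; apply: eq_bigr => -[a k] _ //.
apply: leq_sum => -[l j] _.
rewrite (bigD1 ord0) //=.
apply: leq_trans (leq_addr _ _).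
exact: mult.
Qed.

Lemma construction_lb (lam : R) z (Hs : 'I_z -> {set Et}) :
  ((0 < Rr)%N -> (Rr.+1%:R * lam < (N.+1)%:R)%R) ->
  (forall i, @clustered R Gc (Hs i) (Rr.+1%:R * lam)%R) ->
  @covers_dpaths R Gc z Hs (Rr.+1%:R)%R ->
  (Rr.+1 * N.+2 * Rr.+1 <= \sum_(i < z) #|Hs i|)%N.
Proof.
move=> Hlam Hcl Hcov; apply: total_lb => // i l Hl HR.
case: (boolP [exists j, cycE l j \notin Hs i]) => [/existsP //|Hn].
exfalso; apply: (full_not_clustered (l := inord l) _ (Hlam HR) (Hcl i)).
move=> j; move/existsPn: Hn => /(_ j); by rewrite negbK.
Qed.

End Constr.

Local Open Scope ring_scope.

Theorem theorem1p3 :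
  exists (c1 : nat) (c2 : rat), (0 < c2)%R /\
  forall (R : realType) (m : nat) (lam : R), (1 <= m)%N -> 1 <= lam ->
  exists (G : wdigraph R) (d : R),
    (#|edge G| <= c1 * m)%N /\
    (forall e : edge G, 0 <= wt e) /\
    forall (z : nat) (Hs : 'I_z -> {set edge G}),
      (forall i, clustered (Hs i) (d * lam)) ->
      covers_dpaths Hs d ->
      ratr c2 * m%:R * Num.sqrt (m%:R / lam) <= (\sum_(i < z) #|Hs i|)%:R.
Proof.
exists 9%N, (8%:R^-1); split; first by rewrite invr_gt0 ltr0n.
move=> R m lam Hm Hlam.
have lam0 : 0 < lam by apply: lt_le_trans Hlam; rewrite ltr01.
rewrite fmorphV rmorph_nat.
set t := m%:R / lam.
have Htl : t * lam = m%:R by rewrite /t mulfVK // gt_eqF.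
have t0 : 0 <= t by rewrite /t divr_ge0 // ltW.
set S := Num.sqrt t.
have S0 : 0 <= S := sqrtr_ge0 t.
have SS : S * S = t by rewrite -expr2 sqr_sqrtr.
have sq2 : Num.sqrt (2%:R ^+ 2) = 2%:R :> R by rewrite sqrtr_sqr ger0_norm ?ler0n.
have M1 : 1 <= m%:R :> R by rewrite ler1n.
have Hw : forall (Rr N : nat) (e : edge (Gc R Rr N)), 0 <= wt e.
  by move=> Rr N e /=; rewrite /ewt; case: ifP => _ //; rewrite ler01.
case: (boolP (4%:R <= t)) => Ht.
- have S2 : 2%:R <= S.
    by rewrite -sq2 ler_sqrt // expr2 -natrM.
  have s2 : (2 <= Num.truncn S)%N by rewrite truncn_ge_nat.
  set Rr := (Num.truncn S).-1.
  have sE : Num.truncn S = Rr.+1 by rewrite /Rr prednK //; lia.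
  have /andP [rS Sr] : (Rr.+1)%:R <= S < (Rr.+1).+1%:R.
    by rewrite -sE; apply: truncn_itv.
  set rr := (Rr.+1)%:R : R.
  have r2 : 2%:R <= rr by rewrite /rr ler_nat; lia.
  set N := Num.truncn (rr * lam).
  have rl0 : 0 <= rr * lam by rewrite mulr_ge0 // ltW.
  have /andP [NN1 NN2] : N%:R <= rr * lam < N.+1%:R by apply: truncn_itv.
  exists (Gc R Rr N), rr; split; last split; [|exact: Hw|].
  + rewrite /= !card_prod !card_ord -(ler_nat R) !natrM.
    have -> : (N.+2)%:R = N%:R + 2%:R :> R by rewrite -addn2 natrD.
    rewrite -/rr.
    have Sr' : S < rr + 1 by move: Sr; rewrite -natr1.
    have rrt : rr * rr <= t by nra.
    have rrl : rr * rr * lam <= m%:R by rewrite -Htl ler_wpM2r // ltW.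
    nra.
  + move=> z Hs Hcl Hcov.
    have := construction_lb (lam := lam) (fun _ => NN2) Hcl Hcov.
    rewrite -(ler_nat R) !natrM => H; apply: le_trans H.
    have -> : (N.+2)%:R = N%:R + 2%:R :> R by rewrite -addn2 natrD.
    rewrite -/rr.
    have Sr' : S < rr + 1 by move: Sr; rewrite -natr1.
    have S2r : S <= 2%:R * rr by lra.
    have mlt : m%:R <= 4%:R * (rr * rr * lam).
      rewrite -Htl; have : t <= 4%:R * (rr * rr) by nra.
      move=> H; have := ler_wpM2r (ltW lam0) H; by rewrite !mulrA.
    have H8 : 8%:R^-1 * m%:R * S <= 8%:R^-1 * (4%:R * (rr * rr * lam)) * (2%:R * rr).
      apply: ler_pM => //; first by rewrite mulr_ge0 // invr_ge0 ler0n.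
      by apply: ler_wpM2l => //; rewrite invr_ge0 ler0n.
    apply: le_trans H8 _.
    have NL : rr * lam <= N%:R + 2%:R by lra.
    have -> : 8%:R^-1 * (4%:R * (rr * rr * lam)) * (2%:R * rr) = rr * (rr * lam) * rr.
      by field.
    apply: ler_pM; [| |apply: ler_pM| ] => //; rewrite ?mulr_ge0 //; lra.
- have St : S < 2%:R.
    rewrite -sq2 ltr_sqrt; last by rewrite exprn_gt0.
    by rewrite expr2 -natrM; rewrite leNgt in Ht; move/negbNE: Ht.
  exists (Gc R 0 m.-1), 1; split; last split; [|exact: Hw|].
  + rewrite /= !card_prod !card_ord; lia.
  + move=> z Hs Hcl Hcov.
    have := construction_lb (lam := lam) (Rr := 0) (N := m.-1) (fun H => False_ind _ (notF H)).
    move=> /(_ z Hs) H; have := H Hcl Hcov; clear H.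
    rewrite -(ler_nat R) => H2.
    suff Hk : 8%:R^-1 * m%:R * S <= (1 * m.-1.+2 * 1)%:R by exact: le_trans Hk H2.
    rewrite mul1n muln1 prednK; last lia.
    have Em : (m.+1)%:R = m%:R + 1 :> R by rewrite natr1.
    rewrite Em.
    have : 8%:R^-1 * m%:R * S <= 8%:R^-1 * m%:R * 2%:R.
      by apply: ler_wpM2l; [rewrite mulr_ge0 // invr_ge0 ler0n | exact: ltW].
    move=> H; apply: (le_trans H).
    have -> : 8%:R^-1 * m%:R * 2%:R = m%:R / 4%:R :> R by field.
    lra.
Qed.
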